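(* Let $K$ be a field, $Q$ the bipartite type $A$ quiver with vertices $y_0,x_1,\dots,x_n,y_n$ and arrows $\alpha_i\colon x_i\to y_{i-1}$, $\beta_i\colon x_i\to y_i$, $\mathbf{d}$ a dimension vector, $\mathbf{r}$ a quiver rank array, and $\mathbf{b}(\mathbf{r})$ its block rank matrix. Then there exists a unique $d\times d$ permutation matrix $v(\mathbf{r})$ such that (1) for all $1\le i,j\le 2n+1$ the number of $1$s in block $(i,j)$ of $v(\mathbf{r})$ equals $\mathbf{b}(\mathbf{r})_{i,j}+\mathbf{b}(\mathbf{r})_{i-1,j-1}-\mathbf{b}(\mathbf{r})_{i,j-1}-\mathbf{b}(\mathbf{r})_{i-1,j}$, where $\mathbf{b}(\mathbf{r})_{i,j}=0$ if $i$ or $j$ lies outside $[1,2n+1]$; (2) the $1$s are arranged from northwest to southeast across each block row; (3) the $1$s are arranged from northwest to southeast down each block column.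
   Context: $\mathrm{rep}_Q(\mathbf{d})$: tuples $V=(V_a)$, $V_a\in\mathrm{Mat}_{\mathbf{d}(ha)\times\mathbf{d}(ta)}(K)$. $M_Q(V)$: block matrix with block rows $y_0,\dots,y_n$ and block columns $x_n,\dots,x_1$, with $V_{\alpha_i}$ in block $(y_{i-1},x_i)$, $V_{\beta_i}$ in block $(y_i,x_i)$, zeros elsewhere; for an interval $J$ (nonempty set of consecutive vertices), $M_J(V)$ is its submatrix on block rows of $y$-vertices of $J$ and block columns of $x$-vertices of $J$. A quiver rank array $\mathbf{r}$ is a function on intervals of the form $J\mapsto\operatorname{rank}M_J(V)$ for some $V$; $\mathcal{O}_\mathbf{r}$ the set of such $V$. $d_x=\sum\mathbf{d}(x_i)$, $d_y=\sum\mathbf{d}(y_i)$, $d=d_x+d_y$, $\zeta(V)=\begin{pmatrix}M_Q(V)&\mathbf{1}_{d_y}\\ \mathbf{1}_{d_x}&0\end{pmatrix}$. $d\times d$ matrices are divided into row blocks of sizes $\mathbf{d}(y_0),\dots,\mathbf{d}(y_n),\mathbf{d}(x_n),\dots,\mathbf{d}(x_1)$ and column blocks of sizes $\mathbf{d}(x_n),\dots,\mathbf{d}(x_1),\mathbf{d}(y_0),\dots,\mathbf{d}(y_n)$, numbered $1..2n+1$; $Z_{i\times j}$ is the submatrix of block rows $1..i$ and block columns $1..j$; $\mathbf{b}(\mathbf{r})_{i,j}=\operatorname{rank}\zeta(V)_{i\times j}$ for $V\in\mathcal{O}_\mathbf{r}$. ''Northwest to southeast across a block row'' means: of any two $1$s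 in the same block row, the one in the higher row lies in the column further left (similarly for block columns). *)

(* Defs.v *)
From HB Require Import structures.
From mathcomp Require Import all_boot all_order all_algebra.
Set Implicit Arguments. Unset Strict Implicit. Unset Printing Implicit Defensive.
Import GRing.Theory.
Local Open Scope ring_scope.

(* Conventions:
   - n : the quiver has vertices y_0, x_1, y_1, ..., x_n, y_n.
   - dimension vector: dy k = d(y_k) (k = 0..n), dx k = d(x_k) (k = 1..n).
   - representation: Va k = V_{alpha_k} : d(x_k) -> d(y_{k-1}),
                     Vb k = V_{beta_k}  : d(x_k) -> d(y_k)       (k = 1..n);
     values at other k are irrelevant. *)

(* entry of a matrix at natural-number indices (0 outside the range) *)
Definition mxnat (K : fieldType) m n (A : 'M[K]_(m, n)) (a b : nat) : K :=
  oapp (fun i : 'I_m => oapp (fun j : 'I_n => A i j) 0%R (insub b)) 0%R (insub a).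

(* M_Q(V): block rows y_0..y_n, block columns x_n, ..., x_1
   (block column j < n is x_(n-j)). *)
Definition MQ (K : fieldType) (n : nat) (dy dx : nat -> nat)
  (Va : forall k, 'M[K]_(dy k.-1, dx k)) (Vb : forall k, 'M[K]_(dy k, dx k)) :
  'M[K]_(\sum_(i < n.+1) dy i, \sum_(j < n) dx (n - j)%N)%N :=
  @mxblock K n.+1 n (fun i : 'I_n.+1 => dy i) (fun j : 'I_n => dx (n - j)%N)
    (fun i j => \matrix_(a < dy i, c < dx (n - j)%N)
       (if (i.+1 == n - j)%N then mxnat (Va (n - j)%N) a c
        else if (i == (n - j)%N :> nat) then mxnat (Vb (n - j)%N) a c else 0%R)).

(* vertices in the linear order y_0, x_1, y_1, ..., x_n, y_n are numbered
   0, 1, ..., 2n: y_k has position 2k, x_k has position 2k-1.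
   The interval J = [p, q] (p <= q <= 2n). *)
Definition Ypre (dy : nat -> nat) (k : nat) : nat := (\sum_(i < k) dy i)%N.
Definition Xpre (n : nat) (dx : nat -> nat) (j : nat) : nat := (\sum_(l < j) dx (n - l))%N.

Definition rowin (n : nat) (dy : nat -> nat) (p q : nat) (a : nat) : bool :=
  [exists k : 'I_n.+1, (p <= k.*2 <= q)%N && (Ypre dy k <= a < Ypre dy k.+1)%N].
Definition colin (n : nat) (dx : nat -> nat) (p q : nat) (c : nat) : bool :=
  [exists j : 'I_n, (p <= (n - j).*2.-1 <= q)%N && (Xpre n dx j <= c < Xpre n dx j.+1)%N].

(* M_J(V): the submatrix of M_Q(V) on the block rows of the y-vertices of J
   and the block columns of the x-vertices of J, J = [p, q]. *)
Definition MJ (K : fieldType) (n : nat) (dy dx : nat -> nat)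
  (Va : forall k, 'M[K]_(dy k.-1, dx k)) (Vb : forall k, 'M[K]_(dy k, dx k))
  (p q : nat) :=
  let RS := [pred a : 'I_(\sum_(i < n.+1) dy i)%N | rowin n dy p q a] in
  let CS := [pred c : 'I_(\sum_(j < n) dx (n - j)%N)%N | colin n dx p q c] in
  mxsub (fun u : 'I_#|RS| => enum_val u) (fun w : 'I_#|CS| => enum_val w)
        (@MQ K n dy dx Va Vb).

Definition zeta (K : fieldType) (n : nat) (dy dx : nat -> nat)
  (Va : forall k, 'M[K]_(dy k.-1, dx k)) (Vb : forall k, 'M[K]_(dy k, dx k)) :=
  block_mx (@MQ K n dy dx Va Vb) 1%:M 1%:M 0.

(* block sizes (blocks numbered 1..2n+1):
   rows: d(y_0),...,d(y_n),d(x_n),...,d(x_1);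
   columns: d(x_n),...,d(x_1),d(y_0),...,d(y_n). *)
Definition rs (n : nat) (dy dx : nat -> nat) (k : nat) : nat :=
  if (k <= n.+1)%N then dy k.-1 else dx (n.*2.+2 - k)%N.
Definition cs (n : nat) (dy dx : nat -> nat) (k : nat) : nat :=
  if (k <= n)%N then dx (n.+1 - k)%N else dy (k - n.+1)%N.
Definition Rpre (n : nat) (dy dx : nat -> nat) (i : nat) : nat :=
  (\sum_(1 <= k < i.+1) rs n dy dx k)%N.
Definition Cpre (n : nat) (dy dx : nat -> nat) (j : nat) : nat :=
  (\sum_(1 <= k < j.+1) cs n dy dx k)%N.
(* d = d_x + d_y *)
Definition dtot (n : nat) (dy dx : nat -> nat) : nat := Rpre n dy dx n.*2.+1.

(* block rank matrix b_{i,j} = rank zeta(V)_{i x j}; 0 outside [1, 2n+1]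
   (for i = 0 or j = 0 the submatrix is empty, so its rank is 0). *)
Definition brank (K : fieldType) (n : nat) (dy dx : nat -> nat)
  (Va : forall k, 'M[K]_(dy k.-1, dx k)) (Vb : forall k, 'M[K]_(dy k, dx k))
  (i j : nat) : nat :=
  if (i <= n.*2.+1)%N && (j <= n.*2.+1)%N then
    \rank (\matrix_(a < Rpre n dy dx i, c < Cpre n dy dx j)
             mxnat (@zeta K n dy dx Va Vb) a c)
  else 0.

Definition nones (K : fieldType) (n : nat) (dy dx : nat -> nat)
  (v : 'M[K]_(dtot n dy dx)) (i j : nat) : nat :=
  #|[set pr : 'I_(dtot n dy dx) * 'I_(dtot n dy dx) |
      [&& (Rpre n dy dx i.-1 <= pr.1 < Rpre n dy dx i)%N,
          (Cpre n dy dx j.-1 <= pr.2 < Cpre n dy dx j)%N &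
          v pr.1 pr.2 == 1%R]]|.

Definition nw_rows (K : fieldType) (n : nat) (dy dx : nat -> nat)
  (v : 'M[K]_(dtot n dy dx)) : Prop :=
  forall (i : nat) (a1 a2 c1 c2 : 'I_(dtot n dy dx)),
    (1 <= i <= n.*2.+1)%N ->
    (Rpre n dy dx i.-1 <= a1 < Rpre n dy dx i)%N ->
    (Rpre n dy dx i.-1 <= a2 < Rpre n dy dx i)%N ->
    v a1 c1 = 1%R -> v a2 c2 = 1%R -> (a1 < a2)%N -> (c1 < c2)%N.

Definition nw_cols (K : fieldType) (n : nat) (dy dx : nat -> nat)
  (v : 'M[K]_(dtot n dy dx)) : Prop :=
  forall (j : nat) (a1 a2 c1 c2 : 'I_(dtot n dy dx)),
    (1 <= j <= n.*2.+1)%N ->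
    (Cpre n dy dx j.-1 <= c1 < Cpre n dy dx j)%N ->
    (Cpre n dy dx j.-1 <= c2 < Cpre n dy dx j)%N ->
    v a1 c1 = 1%R -> v a2 c2 = 1%R -> (c1 < c2)%N -> (a1 < a2)%N.

(* Main.v *)
Require Import Defs.
From HB Require Import structures.
From mathcomp Require Import all_boot all_order all_algebra.
From mathcomp Require Import all_fingroup zify.
From Stdlib Require Import Classical.
Import GRing.Theory.
Set Implicit Arguments. Unset Strict Implicit. Unset Printing Implicit Defensive.

Definition inblk (R : nat -> nat) (i x : nat) : bool := (R i.-1 <= x < R i).
Definition cnt d (R C : nat -> nat) (s : {perm 'I_d}) i j : nat :=
  \sum_(r : 'I_d) (inblk R i r && inblk C j (s r)).
Definition nwr d (R : nat -> nat) N (s : {perm 'I_d}) := forall i (r1 r2 : 'I_d),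
  1 <= i <= N -> inblk R i r1 -> inblk R i r2 -> r1 < r2 -> s r1 < s r2.
Definition nwc d (C : nat -> nat) N (s : {perm 'I_d}) := forall j (r1 r2 : 'I_d),
  1 <= j <= N -> inblk C j (s r1) -> inblk C j (s r2) -> s r1 < s r2 -> r1 < r2.

Lemma monoR (R : nat -> nat) : (forall i, R i <= R i.+1) -> forall i j, i <= j -> R i <= R j.
Proof.
move=> HR i j /subnKC <-; elim: (j - i) => [|k IH]; first by rewrite addn0.
by rewrite addnS (leq_trans IH).
Qed.

Lemma blk_exists (R : nat -> nat) N d : (forall i, R i <= R i.+1) -> R 0 = 0 -> R N = d ->
  forall x, x < d -> exists i, 1 <= i <= N /\ inblk R i x.
Proof.
move=> HR H0 HN x xd.
have ex : exists i, x < R i by exists N; rewrite HN.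
case: (ex_minnP ex) => i xi Hmin.
have i1 : 0 < i by case: i xi {Hmin} => [|//]; rewrite H0.
exists i; rewrite i1 Hmin ?HN //; split=> //; rewrite /inblk xi andbT.
case: i i1 xi Hmin => //= i _ xi Hmin; rewrite leqNgt; apply/negP=> /Hmin; lia.
Qed.

Lemma blk_uniq (R : nat -> nat) : (forall i, R i <= R i.+1) ->
  forall i j x, inblk R i x -> inblk R j x -> i = j.
Proof.
move=> HR i j x; rewrite /inblk => /andP[a1 a2] /andP[b1 b2].
case: (ltngtP i j) => // h.
  have := monoR HR (_ : i <= j.-1); lia.
have := monoR HR (_ : j <= i.-1); lia.
Qed.

Lemma blk_same (R : nat -> nat) : (forall i, R i <= R i.+1) ->
  forall i0 x y, inblk R i0 x -> inblk R i0 y -> forall i, inblk R i x = inblk R i y.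
Proof.
move=> HR i0 x y hx hy i.
apply/idP/idP => h.
  by rewrite -(blk_uniq HR hx h).
by rewrite -(blk_uniq HR hy h).
Qed.

Section Comb.
Variables (d N : nat) (R C : nat -> nat).
Hypotheses (HR : forall i, R i <= R i.+1) (HR0 : R 0 = 0) (HRN : R N = d).
Hypotheses (HC : forall i, C i <= C i.+1) (HC0 : C 0 = 0) (HCN : C N = d).

Lemma uniq_key (s1 s2 : {perm 'I_d}) (r : 'I_d) :
  (forall i j, 1 <= i <= N -> 1 <= j <= N -> cnt R C s1 i j = cnt R C s2 i j) ->
  nwr R N s2 -> nwc C N s2 ->
  (forall r' : 'I_d, r' < r -> s1 r' = s2 r') -> s1 r < s2 r -> False.
Proof.
move=> Hc Hr2 Hc2 Hlt hlt.
have [i [Hi ri]] := blk_exists HR HR0 HRN (ltn_ord r).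
have [j1 [Hj1 c1j]] := blk_exists HC HC0 HCN (ltn_ord (s1 r)).
have [j2 [Hj2 c2j]] := blk_exists HC HC0 HCN (ltn_ord (s2 r)).
case: (eqVneq j1 j2) => [ej|nej].
  subst j2.
  set r' := (s2^-1)%g (s1 r).
  have e2 : s2 r' = s1 r by rewrite /r' permKV.
  have hr' : r' < r.
    apply: (Hc2 j1) => //; rewrite ?e2 //.
  have := Hlt _ hr'; rewrite e2 => /perm_inj er.
  by move: hr'; rewrite er ltnn.
have j12 : j1 < j2.
  case: (ltngtP j1 j2) nej => // h _; exfalso.
  move: c1j c2j; rewrite /inblk => /andP[a1 a2] /andP[b1 b2].
  have := monoR HC (_ : j2 <= j1.-1); lia.
have notj1 : forall c, s2 r <= c -> ~~ inblk C j1 c.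
  move=> c hc; rewrite /inblk negb_and -leqNgt orbC; apply/orP; left.
  move: c2j => /andP[b1 _]; apply: leq_trans hc; apply: leq_trans b1.
  by apply: (monoR HC); lia.
have : cnt R C s2 i j1 < cnt R C s1 i j1.
  rewrite /cnt (bigD1 r) //= [X in _ < X](bigD1 r) //= ri c1j (negbTE (notj1 _ (leqnn _))) /=.
  rewrite add0n add1n ltnS; apply: leq_sum => x xr.
  case: (ltngtP x r) => h.
  - by rewrite Hlt.
  - case e: (inblk R i x) => //=; rewrite (negbTE (notj1 _ _)) //.
    by apply: ltnW; apply: (Hr2 i) => //.
  - by move/eqP: xr; case; apply: val_inj.
by rewrite Hc // ltnn.
Qed.

Lemma uniq_perm (s1 s2 : {perm 'I_d}) :
  (forall i j, 1 <= i <= N -> 1 <= j <= N -> cnt R C s1 i j = cnt R C s2 i j) ->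
  nwr R N s1 -> nwc C N s1 -> nwr R N s2 -> nwc C N s2 -> s1 = s2.
Proof.
move=> Hc Hr1 Hc1 Hr2 Hc2.
apply/permP => x; apply/eqP; apply/negPn/negP => hx.
have ex : exists m, [exists r : 'I_d, (r == m :> nat) && (s1 r != s2 r)].
  by exists x; apply/existsP; exists x; rewrite eqxx hx.
case: (ex_minnP ex) => m /existsP[r /andP[/eqP rm hr]] Hmin.
have Hlt : forall r' : 'I_d, r' < r -> s1 r' = s2 r'.
  move=> r' hr'; apply/eqP; apply/negPn/negP => h.
  have : m <= r' by apply: Hmin; apply/existsP; exists r'; rewrite eqxx h.
  by rewrite -rm leqNgt hr'.
case: (ltngtP (s1 r) (s2 r)) => h.
- exact: (uniq_key Hc Hr2 Hc2 Hlt h).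
- apply: (@uniq_key s2 s1 r) => //.
  + by move=> i j hi hj; rewrite Hc.
  + by move=> r' /Hlt ->.
- by move/eqP: hr; apply; apply: val_inj.
Qed.
End Comb.

Definition Phi d (s : {perm 'I_d}) : nat := \sum_(r : 'I_d) r * s r.

Lemma Phi_le d (s : {perm 'I_d}) : Phi s <= d * (d * d).
Proof.
rewrite /Phi -[d in d * _]card_ord -sum_nat_const; apply: leq_sum => r _.
by apply: leq_mul; apply: ltnW.
Qed.

Lemma swap_phi d (s : {perm 'I_d}) (r1 r2 : 'I_d) :
  r1 < r2 -> s r2 < s r1 -> Phi s < Phi (tperm r1 r2 * s)%g.
Proof.
move=> h12 hs.
have n21 : r2 != r1 by rewrite -val_eqE /= gtn_eqF.
have eP : Phi (tperm r1 r2 * s)%g = \sum_(r : 'I_d) r * s (tperm r1 r2 r).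
  by apply: eq_bigr => x _; congr (_ * _); congr (nat_of_ord _); exact: permM.
have e : Phi s + (r1 * s r2 + r2 * s r1) = Phi (tperm r1 r2 * s)%g + (r1 * s r1 + r2 * s r2).
  rewrite eP /Phi (bigD1 r1) // (bigD1 r2) //= [in RHS](bigD1 r1) // [in RHS](bigD1 r2) //=.
  rewrite tpermL tpermR.
  rewrite [in RHS](eq_bigr (fun r : 'I_d => r * s r)) => [|x /andP[x1 x2]]; last first.
    by rewrite tpermD // eq_sym.
  lia.
have : r1 * s r1 + r2 * s r2 < r1 * s r2 + r2 * s r1 by nia.
lia.
Qed.

Section Comb2.
Variables (d N : nat) (R C : nat -> nat).
Hypotheses (HR : forall i, R i <= R i.+1) (HR0 : R 0 = 0) (HRN : R N = d).
Hypotheses (HC : forall i, C i <= C i.+1) (HC0 : C 0 = 0) (HCN : C N = d).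

Lemma cnt_swap_row (s : {perm 'I_d}) (r1 r2 : 'I_d) i0 :
  inblk R i0 r1 -> inblk R i0 r2 -> forall i j, cnt R C (tperm r1 r2 * s)%g i j = cnt R C s i j.
Proof.
move=> h1 h2 i j; rewrite /cnt (reindex_inj (@perm_inj _ (tperm r1 r2))) /=.
apply: eq_bigr => x _; rewrite permM tpermK; congr (_ && _).
case: tpermP => [->|->|//]; apply: (blk_same HR (i0 := i0)) => //.
Qed.

Lemma cnt_swap_col (s : {perm 'I_d}) (r1 r2 : 'I_d) j0 :
  inblk C j0 (s r1) -> inblk C j0 (s r2) -> forall i j, cnt R C (tperm r1 r2 * s)%g i j = cnt R C s i j.
Proof.
move=> h1 h2 i j; rewrite /cnt; apply: eq_bigr => x _; rewrite permM; congr (_ && _).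
case: tpermP => [->|->|//]; apply: (blk_same HC (i0 := j0)) => //.
Qed.

Lemma exists_nw (sig : {perm 'I_d}) : exists tau : {perm 'I_d},
  [/\ forall i j, cnt R C tau i j = cnt R C sig i j, nwr R N tau & nwc C N tau].
Proof.
suff H : forall m (s : {perm 'I_d}), d * (d * d) - Phi s < m ->
  (forall i j, cnt R C s i j = cnt R C sig i j) -> exists tau : {perm 'I_d},
  [/\ forall i j, cnt R C tau i j = cnt R C sig i j, nwr R N tau & nwc C N tau].
  by apply: (H (d * (d * d) - Phi sig).+1).
elim=> [//|m IH] s hm hc.
have step : forall r1 r2 : 'I_d, r1 < r2 -> s r2 < s r1 ->
    (forall i j, cnt R C (tperm r1 r2 * s)%g i j = cnt R C s i j) ->
    exists tau : {perm 'I_d},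
    [/\ forall i j, cnt R C tau i j = cnt R C sig i j, nwr R N tau & nwc C N tau].
  move=> r1 r2 h12 hs hc'; apply: (IH (tperm r1 r2 * s)%g).
    have := swap_phi h12 hs; have := Phi_le (tperm r1 r2 * s)%g; lia.
  by move=> i j; rewrite hc'.
case: (classic (exists i (r1 r2 : 'I_d), [/\ 1 <= i <= N, inblk R i r1, inblk R i r2,
           r1 < r2 & s r2 < s r1])) => [[i [r1 [r2 [_ h1 h2 h12 hs]]]]|nrow].
  by apply: (step r1 r2 h12 hs); apply: cnt_swap_row h1 h2.
case: (classic (exists j (r1 r2 : 'I_d), [/\ 1 <= j <= N, inblk C j (s r1), inblk C j (s r2),
           r1 < r2 & s r2 < s r1])) => [[j [r1 [r2 [_ h1 h2 h12 hs]]]]|ncol].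
  by apply: (step r1 r2 h12 hs); apply: cnt_swap_col h1 h2.
exists s; split => //.
  move=> i r1 r2 hi h1 h2 h12; case: (ltngtP (s r1) (s r2)) => // h.
    by exfalso; apply: nrow; exists i, r1, r2.
  by move/val_inj/perm_inj: h => e; move: h12; rewrite e ltnn.
move=> j r1 r2 hj h1 h2 h12; case: (ltngtP r1 r2) => // h.
  by exfalso; apply: ncol; exists j, r2, r1.
by move/val_inj: h => e; move: h12; rewrite e ltnn.
Qed.
End Comb2.

Local Open Scope ring_scope.

Section LA.
Variables (K : fieldType) (d : nat) (Z : 'M[K]_d).
Hypothesis hZ : row_free Z.

Definition Tr a b : nat := \rank (pid_mx a *m Z *m pid_mx b : 'M[K]_(a, b)).

Lemma minn_S a : minn a.+1 (minn a a.+1) = a.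
Proof. by rewrite (minn_idPl (leqnSn a)) (minn_idPr (leqnSn a)). Qed.
Lemma minn_S' a : minn a.+1 (minn a.+1 a) = a.
Proof. by rewrite !(minn_idPr (leqnSn a)). Qed.

Lemma Tr_rowE a b : (pid_mx a : 'M[K]_(a, a.+1)) *m (pid_mx a.+1 *m Z *m pid_mx b : 'M_(a.+1, b)) = (pid_mx a *m Z *m pid_mx b : 'M_(a, b)).
Proof. by rewrite !mulmxA mul_pid_mx minn_S. Qed.

Lemma Tr_colE a b : (pid_mx a *m Z *m pid_mx b.+1 : 'M_(a, b.+1)) *m (pid_mx b : 'M[K]_(b.+1, b)) = (pid_mx a *m Z *m pid_mx b : 'M_(a, b)).
Proof. by rewrite -!mulmxA mul_pid_mx minn_S'. Qed.

Lemma Tr_row a b : (Tr a b <= Tr a.+1 b <= (Tr a b).+1)%N.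
Proof.
rewrite /Tr -Tr_rowE mxrankM_maxr /=.
have := mxrank_mul_min (pid_mx a : 'M[K]_(a, a.+1)) (pid_mx a.+1 *m Z *m pid_mx b : 'M_(a.+1, b)).
rewrite rank_pid_mx //; lia.
Qed.

Lemma Tr_col a b : (Tr a b <= Tr a b.+1 <= (Tr a b).+1)%N.
Proof.
rewrite /Tr -Tr_colE mxrankM_maxl /=.
have := mxrank_mul_min (pid_mx a *m Z *m pid_mx b.+1 : 'M_(a, b.+1)) (pid_mx b : 'M[K]_(b.+1, b)).
rewrite rank_pid_mx //; lia.
Qed.

Lemma Tr_sub a b : (Tr a.+1 b + Tr a b.+1 <= Tr a.+1 b.+1 + Tr a b)%N.
Proof.
have := mxrank_Frobenius (pid_mx a : 'M[K]_(a, a.+1)) (pid_mx a.+1 *m Z *m pid_mx b.+1 : 'M_(a.+1, b.+1))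
   (pid_mx b : 'M[K]_(b.+1, b)).
rewrite Tr_rowE !Tr_colE /Tr; lia.
Qed.

Lemma Tr0b b : Tr 0 b = 0.
Proof. by apply/eqP; rewrite -leqn0 /Tr rank_leq_row. Qed.
Lemma Tra0 a : Tr a 0 = 0.
Proof. by apply/eqP; rewrite -leqn0 /Tr rank_leq_col. Qed.
Lemma Trad a : (a <= d)%N -> Tr a d = a.
Proof.
by move=> ad; rewrite /Tr pid_mx_1 mulmx1 mxrankMfree // rank_pid_mx.
Qed.
End LA.

Local Close Scope ring_scope.
Lemma sigma_exists (d : nat) (T : nat -> nat -> nat) :
  (forall a b, T a b <= T a.+1 b <= (T a b).+1)%N ->
  (forall a b, T a.+1 b + T a b.+1 <= T a.+1 b.+1 + T a b)%N ->
  (forall b, T 0 b = 0) -> (forall a, T a 0 = 0) ->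
  (forall a, a <= d -> T a d = a)%N ->
  (forall a b, T a b <= T a b.+1 <= (T a b).+1)%N ->
  exists s : {perm 'I_d}, forall a b, (a <= d)%N ->
     T a b = (\sum_(r : 'I_d) ((r < a) && (s r < b)))%N.
Proof.
move=> hr hs h0b ha0 had hc.
have exP : forall a, exists b, (T a.+1 b.+1 == (T a b.+1).+1) || (d <= b)%N.
  by move=> a; exists d; rewrite leqnn orbT.
pose f a := ex_minn (exP a).
have mono : forall a b k, (T a.+1 b + T a (b + k) <= T a.+1 (b + k) + T a b)%N.
  move=> a b; elim=> [|k IH]; first by rewrite !addn0.
  have := hs a (b + k); rewrite !addnS; lia.
have key : forall a, (a < d)%N -> forall b, T a.+1 b = (T a b + (f a < b))%N.
  move=> a ad b; rewrite /f; case: ex_minnP => m Pm Hmin.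
  have md : (m < d)%N.
    have : (m <= d.-1)%N.
      apply: Hmin; apply/orP; left; rewrite (prednK (_ : 0 < d)%N); last by lia.
      by rewrite (had a.+1 ad) (had a (ltnW ad)) eqxx.
    lia.
  move: Pm; rewrite leqNgt md orbF => /eqP Pm.
  case: (ltnP m b) => hb /=.
    have := mono a m.+1 (b - m.+1); rewrite subnKC //.
    have := hr a b; lia.
  case: b hb => [|b] hb; first by rewrite !ha0.
  have nP : ~~ ((T a.+1 b.+1 == (T a b.+1).+1) || (d <= b)%N).
    apply/negP => /Hmin; lia.
  move: nP; rewrite negb_or => /andP[/eqP nP _].
  have := hr a b.+1; lia.
have Tsum : forall a, (a <= d)%N -> forall b, T a b = (\sum_(k < a) (f k < b))%N.
  elim=> [|a IH] ad b; first by rewrite h0b big_ord0.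
  by rewrite big_ord_recr /= key // IH // ltnW.
have fd : forall a, (a < d)%N -> (f a < d)%N.
  move=> a ad; have := key a ad d; rewrite (had a.+1 ad) (had a (ltnW ad)).
  by case: (f a < d)%N => //=; lia.
have finj : forall (k1 k2 : 'I_d), f k1 = f k2 -> k1 = k2.
  move=> k1 k2 e; apply/eqP; apply/negPn/negP => ne.
  set c := f k1.
  have e1 : (\sum_(k < d) (f k < c.+1) = \sum_(k < d) (f k < c) + \sum_(k < d) (f k == c))%N.
    rewrite -big_split; apply: eq_bigr => k _ /=; rewrite ltnS leq_eqVlt.
    by case: ltngtP.
  have e2 : (2 <= \sum_(k < d) (f k == c))%N.
    rewrite (bigD1 k1) //= (bigD1 k2) /=; last by rewrite eq_sym.
    by rewrite eqxx -e eqxx.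
  have := hc d c; rewrite !Tsum // e1; lia.
have gP : forall k : 'I_d, (f k < d)%N by move=> k; apply: fd.
pose g (k : 'I_d) : 'I_d := Ordinal (gP k).
have ginj : injective g by move=> k1 k2 [] /finj.
exists (perm ginj) => a b ad.
rewrite Tsum // (big_ord_widen d (fun k => nat_of_bool (f k < b)) ad) big_mkcond.
by apply: eq_bigr => k _; rewrite permE /=; case: (k < a)%N.
Qed.

Local Close Scope ring_scope.
Local Open Scope ring_scope.

Section Bridge.
Variable K : fieldType.

Lemma pid_mul_l m p a (M : 'M[K]_(m, p)) (i : 'I_a) k :
  (pid_mx a *m M) i k = oapp (fun i' => M i' k) 0 (insub (val i)).
Proof.
rewrite mxE; case: insubP => [i' _ ei|ni] /=.
  rewrite (bigD1 i') //= big1 ?addr0 => [|l nl].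
    by rewrite mxE ei eqxx ltn_ord mul1r.
  by rewrite mxE -ei eq_sym val_eqE (negbTE nl) mul0r.
rewrite big1 // => l _; rewrite mxE.
case: eqP => [el|]; last by rewrite mul0r.
by move: ni => /=; rewrite el ltn_ord.
Qed.

Lemma mul_pid_r m p b (M : 'M[K]_(m, p)) i (j : 'I_b) :
  (M *m pid_mx b) i j = oapp (fun j' => M i j') 0 (insub (val j)).
Proof.
rewrite mxE; case: insubP => [j' _ ej|nj] /=.
  rewrite (bigD1 j') //= big1 ?addr0 => [|l nl].
    by rewrite mxE ej eqxx ltn_ord mulr1.
  by rewrite mxE -ej val_eqE (negbTE nl) mulr0.
rewrite big1 // => l _; rewrite mxE.
case: eqP => [el|]; last by rewrite mulr0.
by move: nj => /=; rewrite -el ltn_ord.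
Qed.

Lemma mxnat_pid d (Z : 'M[K]_d) a b :
  \matrix_(i < a, j < b) mxnat Z i j = pid_mx a *m Z *m pid_mx b.
Proof.
apply/matrixP => i j; rewrite mxE mul_pid_r /mxnat.
case: (insub (val j)) => [j'|] /=; rewrite ?pid_mul_l //.
by case: (insub (val i)).
Qed.

Lemma mxnat_ord m n (A : 'M[K]_(m, n)) (i : 'I_m) (j : 'I_n) : mxnat A i j = A i j.
Proof. by rewrite /mxnat !valK. Qed.

Lemma mxnat_cast m n d (A : 'M[K]_(m, n)) : m = d -> n = d ->
  (forall a b, mxnat (\matrix_(i < d, j < d) mxnat A i j) a b = mxnat A a b) /\
  \rank (\matrix_(i < d, j < d) mxnat A i j) = \rank A.
Proof.
move=> em en; subst m n.
have -> : \matrix_(i < d, j < d) mxnat A i j = A.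
  by apply/matrixP => i j; rewrite mxE mxnat_ord.
by [].
Qed.

Lemma perm_mx_eq1 d (s : {perm 'I_d}) i j : (perm_mx s i j == 1 :> K) = (s i == j).
Proof.
rewrite /perm_mx !mxE; case: (s i == j) => //=.
  by rewrite eqxx.
by rewrite eq_sym oner_eq0.
Qed.

End Bridge.

Local Close Scope ring_scope.

Lemma Rpre_N n dy dx :
  Rpre n dy dx n.*2.+1 = (\sum_(i < n.+1) dy i + \sum_(j < n) dx (n - j))%N.
Proof.
rewrite /Rpre (big_cat_nat _ (n := n.+2)) //=; last by lia.
congr (_ + _).
  rewrite big_add1 /= big_mkord; apply: eq_bigr => i _.
  by rewrite /rs ltn_ord.
rewrite -[n.+2]add0n big_addn (_ : n.*2.+2 - n.+2 = n); last by lia.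
rewrite big_mkord; apply: eq_bigr => i _; rewrite /rs.
have hi := ltn_ord i.
rewrite (_ : (i + n.+2 <= n.+1) = false); last by lia.
congr dx; lia.
Qed.

Lemma Cpre_N n dy dx :
  Cpre n dy dx n.*2.+1 = (\sum_(j < n) dx (n - j) + \sum_(i < n.+1) dy i)%N.
Proof.
rewrite /Cpre (big_cat_nat _ (n := n.+1)) //=; last by lia.
congr (_ + _).
  rewrite big_add1 /= big_mkord; apply: eq_bigr => i _.
  by rewrite /cs ltn_ord subSS.
rewrite -[n.+1]add0n big_addn (_ : n.*2.+2 - n.+1 = n.+1); last by lia.
rewrite big_mkord; apply: eq_bigr => i _; rewrite /cs.
rewrite (_ : (i + n.+1 <= n) = false); last by lia.
  by rewrite addnK.
Qed.

Lemma Rpre_S n dy dx i : Rpre n dy dx i <= Rpre n dy dx i.+1.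
Proof. by rewrite /Rpre [X in _ <= X]big_nat_recr //= leq_addr. Qed.
Lemma Cpre_S n dy dx i : Cpre n dy dx i <= Cpre n dy dx i.+1.
Proof. by rewrite /Cpre [X in _ <= X]big_nat_recr //= leq_addr. Qed.
Lemma Rpre_0 n dy dx : Rpre n dy dx 0 = 0.
Proof. by rewrite /Rpre big_geq. Qed.
Lemma Cpre_0 n dy dx : Cpre n dy dx 0 = 0.
Proof. by rewrite /Cpre big_geq. Qed.

Local Open Scope ring_scope.
Lemma zeta_rank (K : fieldType) (n : nat) (dy dx : nat -> nat)
  (Va : forall k, 'M[K]_(dy k.-1, dx k)) (Vb : forall k, 'M[K]_(dy k, dx k)) :
  \rank (@zeta K n dy dx Va Vb) = (\sum_(i < n.+1) dy i + \sum_(j < n) dx (n - j))%N.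
Proof.
set M := @MQ K n dy dx Va Vb.
have e : @zeta K n dy dx Va Vb *m block_mx 0 1%:M 1%:M (- M) = 1%:M.
  rewrite /zeta mulmx_block !mulmx0 !mulmx1 !mul1mx !mul0mx !addr0 !add0r.
  by rewrite -/M subrr -scalar_mx_block.
apply/eqP; rewrite eqn_leq rank_leq_row /=.
by rewrite -{1}(mxrank1 K (\sum_(i < n.+1) dy i + \sum_(j < n) dx (n - j))%N) -e mxrankM_maxl.
Qed.

Local Close Scope ring_scope.

Definition Nab d (s : {perm 'I_d}) a b : nat := \sum_(r : 'I_d) ((r < a) && (s r < b)).

Lemma ie d (s : {perm 'I_d}) a0 a1 b0 b1 : a0 <= a1 -> b0 <= b1 ->
  \sum_(r : 'I_d) ((a0 <= r < a1) && (b0 <= s r < b1)) + Nab s a0 b1 + Nab s a1 b0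
  = Nab s a1 b1 + Nab s a0 b0.
Proof.
move=> ha hb; rewrite /Nab -!big_split; apply: eq_bigr => r _ /=.
case: (ltnP r a0) => h1; case: (ltnP r a1) => h2; case: (ltnP (s r) b0) => h3;
  case: (ltnP (s r) b1) => h4 //=; lia.
Qed.

Lemma nones_perm (K : fieldType) n dy dx (s : {perm 'I_(dtot n dy dx)}) i j :
  @nones K n dy dx (perm_mx s) i j = cnt (Rpre n dy dx) (Cpre n dy dx) s i j.
Proof.
rewrite /nones /cnt -sum1_card big_mkcond /=.
pose G (r c : 'I_(dtot n dy dx)) : nat := if [&& (Rpre n dy dx i.-1 <= r < Rpre n dy dx i)%N,
          (Cpre n dy dx j.-1 <= c < Cpre n dy dx j)%N & @perm_mx K _ s r c == 1%R] then 1 else 0.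
rewrite (eq_bigr (fun p => G p.1 p.2)); last by case=> r c _; rewrite inE.
rewrite -pair_bigA /=.
apply: eq_bigr => r _.
rewrite (bigD1 (s r)) //= big1 ?addn0 => [|c nc].
  by rewrite /G perm_mx_eq1 eqxx andbT /inblk; case: (_ && _).
by rewrite /G perm_mx_eq1 eq_sym (negbTE nc) !andbF.
Qed.

Local Open Scope ring_scope.
Unset Implicit Arguments.

Theorem proposition4p8 (K : fieldType) (n : nat) (dy dx : nat -> nat)
  (Va : forall k, 'M[K]_(dy k.-1, dx k)) (Vb : forall k, 'M[K]_(dy k, dx k))
  (r : nat -> nat -> nat)
  (HVr : forall p q : nat, (p <= q <= n.*2)%N -> r p q = \rank (@MJ K n dy dx Va Vb p q)) :
  exists! v : 'M[K]_(dtot n dy dx),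
    [/\ is_perm_mx v,
        (forall i j : nat, (1 <= i <= n.*2.+1)%N -> (1 <= j <= n.*2.+1)%N ->
           (@nones K n dy dx v i j)%:Z =
             ((@brank K n dy dx Va Vb i j)%:Z + (@brank K n dy dx Va Vb i.-1 j.-1)%:Z
              - (@brank K n dy dx Va Vb i j.-1)%:Z - (@brank K n dy dx Va Vb i.-1 j)%:Z)%R),
        @nw_rows K n dy dx v & @nw_cols K n dy dx v].
Proof.
set d := dtot n dy dx.
set N := n.*2.+1.
set R := Rpre n dy dx.
set C := Cpre n dy dx.
have eR : (\sum_(i < n.+1) dy i + \sum_(j < n) dx (n - j))%N = d by rewrite /d /dtot Rpre_N.
have eC : (\sum_(j < n) dx (n - j) + \sum_(i < n.+1) dy i)%N = d by rewrite addnC.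
have [hmx hrk] := mxnat_cast (@zeta K n dy dx Va Vb) eR eC.
set Z := \matrix_(i < d, j < d) mxnat (@zeta K n dy dx Va Vb) i j.
have hZ : row_free Z by rewrite /row_free hrk zeta_rank eR.
have RS : forall i, (R i <= R i.+1)%N by move=> i; apply: Rpre_S.
have CS : forall i, (C i <= C i.+1)%N by move=> i; apply: Cpre_S.
have R0 : R 0%N = 0%N by apply: Rpre_0.
have C0 : C 0%N = 0%N by apply: Cpre_0.
have RN : R N = d by [].
have CN : C N = d by rewrite /C Cpre_N.
have hb : forall i j, (i <= N)%N -> (j <= N)%N ->
    @brank K n dy dx Va Vb i j = Tr Z (R i) (C j).
  move=> i j hi hj; rewrite /brank hi hj /= /Tr -mxnat_pid; congr (\rank _).
  by apply/matrixP => a b; rewrite !mxE hmx.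
have [sig hsig] := sigma_exists (Tr_row hZ) (Tr_sub hZ) (Tr0b Z) (Tra0 Z) (@Trad _ _ _ hZ) (Tr_col hZ).
have Rle : forall i, (i <= N)%N -> (R i <= d)%N.
  by move=> i hi; rewrite -RN; apply: monoR.
have formula : forall i j, (1 <= i <= N)%N -> (1 <= j <= N)%N ->
   (cnt R C sig i j + @brank K n dy dx Va Vb i.-1 j + @brank K n dy dx Va Vb i j.-1 =
    @brank K n dy dx Va Vb i j + @brank K n dy dx Va Vb i.-1 j.-1)%N.
  move=> i j /andP[i1 iN] /andP[j1 jN].
  have iN' : (i.-1 <= N)%N by lia.
  have jN' : (j.-1 <= N)%N by lia.
  rewrite !hb // !hsig ?Rle //.
  have := ie sig (monoR RS (leq_pred i)) (monoR CS (leq_pred j)).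
  rewrite /Nab /cnt /inblk; lia.
have [tau [hct hr hc]] := exists_nw RS R0 RN CS C0 CN sig.
have hperm : forall (s : {perm 'I_d}) a c, (perm_mx s a c = 1 :> K) <-> s a = c.
  move=> s a c; split => e.
    by apply/eqP; rewrite -(perm_mx_eq1 K) e.
  by apply/eqP; rewrite (perm_mx_eq1 K) e.
have nwr_of : forall s : {perm 'I_d}, @nw_rows K n dy dx (perm_mx s) <-> nwr R N s.
  move=> s; split => H.
    move=> i r1 r2 hi h1 h2 h12; apply: (H i r1 r2 (s r1) (s r2)) => //; exact/hperm.
  move=> i a1 a2 c1 c2 hi h1 h2 /hperm e1 /hperm e2 h12; subst c1 c2; exact: (H i).
have nwc_of : forall s : {perm 'I_d}, @nw_cols K n dy dx (perm_mx s) <-> nwc C N s.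
  move=> s; split => H.
    move=> j r1 r2 hj h1 h2 h12; apply: (H j r1 r2 (s r1) (s r2)) => //; exact/hperm.
  move=> j a1 a2 c1 c2 hj h1 h2 /hperm e1 /hperm e2 h12; subst c1 c2; exact: (H j).
exists (perm_mx tau); split.
  split.
  - exact: perm_mx_is_perm.
  - move=> i j hi hj; rewrite nones_perm hct.
    have := formula i j hi hj; lia.
  - exact/nwr_of.
  - exact/nwc_of.
move=> v [/is_perm_mxP [s ->] hcs /nwr_of hrs /nwc_of hcols].
congr perm_mx; apply: (uniq_perm RS R0 RN CS C0 CN) => //.
move=> i j hi hj; have := formula i j hi hj; have := hcs i j hi hj.
rewrite nones_perm hct -/R -/C -/d.
lia.
Qed.
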